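(* Let $M\in\mathbb R^{n\times n}$ be sufficient, $Q\in\mathbb R^{n\times d}$, $q\in\mathbb R^n$ and $S=\{q+Q\theta:\theta\in\mathbb R^d\}$. Then $S_f=S\cap K(M)$ is a convex polyhedron.
   Context: The complementary range $K(M)$ is the set of $q'\in\mathbb R^n$ for which there exist $w,z\in\mathbb R^n$ with $w-Mz=q'$, $w,z\ge0$, $w^Tz=0$. $M$ is column sufficient if $[z_i(Mz)_i\le 0\ \forall i]\Rightarrow[z_i(Mz)_i=0\ \forall i]$; row sufficient if $M^T$ is column sufficient; sufficient if both. *)

(* Defs.v *)
From HB Require Import structures.
From mathcomp Require Import all_boot all_order all_algebra.
Set Implicit Arguments. Unset Strict Implicit. Unset Printing Implicit Defensive.
Import Order.TTheory GRing.Theory Num.Theory.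
Local Open Scope ring_scope.

Definition column_sufficient (R : realFieldType) (n : nat) (M : 'M[R]_n) : Prop :=
  forall z : 'cV[R]_n,
    (forall i : 'I_n, z i 0 * (M *m z) i 0 <= 0) ->
    (forall i : 'I_n, z i 0 * (M *m z) i 0 = 0).

Definition row_sufficient (R : realFieldType) (n : nat) (M : 'M[R]_n) : Prop :=
  column_sufficient M^T.

Definition sufficient (R : realFieldType) (n : nat) (M : 'M[R]_n) : Prop :=
  column_sufficient M /\ row_sufficient M.

Definition compl_range (R : realFieldType) (n : nat) (M : 'M[R]_n) (q' : 'cV[R]_n) : Prop :=
  exists (w z : 'cV[R]_n),
    w - M *m z = q' /\
    (forall i : 'I_n, 0 <= w i 0) /\ (forall i : 'I_n, 0 <= z i 0) /\
    (w^T *m z) 0 0 = 0.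

Definition polyhedron (R : realFieldType) (n : nat) (P : 'cV[R]_n -> Prop) : Prop :=
  exists (m : nat) (A : 'M[R]_(m, n)) (b : 'cV[R]_m),
    forall x : 'cV[R]_n, P x <-> (forall i : 'I_m, (A *m x) i 0 <= b i 0).

(* Main.v *)
Require Import Defs.
From HB Require Import structures.
From mathcomp Require Import all_boot all_order all_algebra.
Import Order.TTheory GRing.Theory Num.Theory.
Local Open Scope ring_scope.

Definition polyF (R : realFieldType) (p : nat) (P : 'cV[R]_p -> Prop) :=
  exists (T : finType) (a : T -> 'rV[R]_p) (b : T -> R),
    forall v, P v <-> forall t, (a t *m v) 0 0 <= b t.

Arguments polyF {R p}.
Lemma exmax (R : realFieldType) (T : finType) (P : pred T) (F : T -> R) (t0 : T) :
  P t0 -> exists t, P t /\ forall j, P j -> F j <= F t.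
Proof. move=> Pt0; case: (arg_maxP F Pt0) => t Pt Ht; by exists t. Qed.

Arguments exmax {R T P} F {t0}.
Lemma comb (R : realFieldType) (x y s u w : R) :
  - w * (x + s * u) + u * (y + s * w) = - w * x + u * y.
Proof.
rewrite !mulrDr addrACA [X in _ + X = _](_ : _ = 0) ?addr0 //.
rewrite mulNr mulrCA [u * (s * w)]mulrCA [w * u]mulrC. by rewrite addNr.
Qed.

Arguments comb {R}.
Lemma posc (R : realFieldType) (x s c b : R) : 0 < c ->
  (x + s * c <= b) = (s <= (b - x) / c).
Proof. by move=> c0; rewrite ler_pdivlMr // lerBrDl. Qed.

Lemma negc (R : realFieldType) (x s c b : R) : c < 0 ->
  (x + s * c <= b) = ((b - x) / c <= s).
Proof. by move=> c0; rewrite ler_ndivrMr // lerBrDl. Qed.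

Lemma pairc (R : realFieldType) (xi xj ci cj bi bj : R) : 0 < ci -> cj < 0 ->
  - cj * xi + ci * xj <= - cj * bi + ci * bj -> (bj - xj) / cj <= (bi - xi) / ci.
Proof.
move=> ci0 cj0 H.
set s0 := (bi - xi) / ci.
have e : xi + s0 * ci = bi.
  by rewrite /s0 divfK ?gt_eqF // addrC subrK.
rewrite -negc //.
rewrite -(comb xi xj s0 ci cj) e in H.
by rewrite -(ler_pM2l ci0); rewrite lerD2l in H.
Qed.

Lemma entD (R : realFieldType) (k l : nat) (x y : R) (X Y : 'M[R]_(k.+1,l.+1)) :
  (x *: X + y *: Y) 0 0 = x * X 0 0 + y * Y 0 0.
Proof. by rewrite !mxE. Qed.

Lemma FM1 (R : realFieldType) (m p : nat) (P : 'cV[R]_m -> Prop) (A : 'M[R]_(m,p)) (c : 'cV[R]_m) :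
  polyF P -> polyF (fun v => exists s : R, P (A *m v + s *: c)).
Proof.
case=> T [a [b HP]].
pose g t := a t *m A. pose cc t := (a t *m c) 0 0.
have key : forall v s t, (a t *m (A *m v + s *: c)) 0 0 = (g t *m v) 0 0 + s * cc t.
  by move=> v s t; rewrite mulmxDr mulmxA -scalemxAr mxE [X in _ + X]mxE mulrC.
pose cond i j := (0 < cc i) && (cc j < 0).
exists (prod T T)%type.
exists (fun ij => if cc ij.1 == 0 then g ij.1 else if cond ij.1 ij.2 then (- cc ij.2) *: g ij.1 + cc ij.1 *: g ij.2 else 0).
exists (fun ij => if cc ij.1 == 0 then b ij.1 else if cond ij.1 ij.2 then (- cc ij.2) * b ij.1 + cc ij.1 * b ij.2 else 0).
move=> v; split.
- case=> s /HP Hs [i j] /=. have Hi := Hs i; have Hj := Hs j. rewrite key in Hi; rewrite key in Hj.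
  case: eqP => [c0|_]; first by rewrite c0 mulr0 addr0 in Hi.
  case: ifP => [/andP[ci cj]|_]; last by rewrite mul0mx mxE.
  rewrite mulmxDl -!scalemxAl entD.
  rewrite -[X in X <= _](comb _ _ s (cc i) (cc j)).
  apply: lerD; apply: ler_wpM2l => //; rewrite ?oppr_ge0; exact: ltW.
- move=> H.
  pose G t := (g t *m v) 0 0.
  have Hz : forall t, cc t = 0 -> G t <= b t.
    move=> t ct; have := H (t, t); by rewrite /= ct eqxx.
  have Hp : forall i j, 0 < cc i -> cc j < 0 -> (b j - G j) / cc j <= (b i - G i) / cc i.
    move=> i j ci cj; apply: pairc => //; have := H (i, j).
    by rewrite /= gt_eqF // /cond ci cj /= mulmxDl -!scalemxAl entD.
  suff [s Hs] : exists s, forall t, G t + s * cc t <= b t.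
    by exists s; apply/HP => t; rewrite key; exact: Hs.
  case: (boolP [exists j, cc j < 0]) => [/existsP [j0 Hj0]|].
    have [js [Hjs Hmax]] := exmax (P := fun j => cc j < 0) (fun j => (b j - G j) / cc j) Hj0.
    exists ((b js - G js) / cc js) => t.
    case: (ltrgtP (cc t) 0) => ct.
    + by rewrite negc //; apply: Hmax.
    + by rewrite posc //; apply: Hp.
    + by rewrite ct mulr0 addr0; apply: Hz.
  rewrite negb_exists => /forallP Hneg.
  case: (boolP [exists i, 0 < cc i]) => [/existsP [i0 Hi0]|].
    have [i1 [Hi1 Hmax]] := exmax (P := fun i => 0 < cc i) (fun i => - ((b i - G i) / cc i)) Hi0.
    exists ((b i1 - G i1) / cc i1) => t.
    case: (ltrgtP (cc t) 0) => ct.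
    + by have := Hneg t; rewrite ct.
    + by rewrite posc // -lerN2; apply: Hmax.
    + by rewrite ct mulr0 addr0; apply: Hz.
  rewrite negb_exists => /forallP Hpos.
  exists 0 => t; case: (ltrgtP (cc t) 0) => ct.
  + by have := Hneg t; rewrite ct.
  + by have := Hpos t; rewrite ct.
  + by rewrite ct mulr0 addr0; apply: Hz.
Qed.

Lemma polyF_ext (R : realFieldType) (p : nat) (P Q : 'cV[R]_p -> Prop) :
  polyF P -> (forall v, P v <-> Q v) -> polyF Q.
Proof.
case=> T [a [b H]] E; exists T, a, b => v; apply: iff_trans (iff_sym (E v)) (H v).
Qed.

Arguments polyF_ext {R p P Q}.
Lemma polyF_pre (R : realFieldType) (m p : nat) (P : 'cV[R]_m -> Prop) (A : 'M[R]_(m,p)) :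
  polyF P -> polyF (fun v => P (A *m v)).
Proof.
case=> T [a [b H]]; exists T, (fun t => a t *m A), b => v.
apply: iff_trans (H _) _; split=> Hv t; have := Hv t; by rewrite mulmxA.
Qed.

Arguments polyF_pre {R m p P} A.
Arguments FM1 {R m p P} A c.
Lemma FMk (R : realFieldType) (k : nat) : forall (m p : nat) (P : 'cV[R]_m -> Prop)
  (A : 'M[R]_(m,p)) (B : 'M[R]_(m,k)),
  polyF P -> polyF (fun v => exists y : 'cV[R]_k, P (A *m v + B *m y)).
Proof.
elim: k => [|k IH] m p P A B HP.
  apply: polyF_ext (polyF_pre A HP) _ => v; split.
    by move=> Hv; exists 0; rewrite mulmx0 addr0.
  by case=> y; rewrite [y]flatmx0 mulmx0 addr0.
pose B' : 'M[R]_(m, 1 + k) := B.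
pose c : 'cV[R]_m := lsubmx B'.
pose P' := fun u : 'cV[R]_(p + k) => exists s : R, P (row_mx A (rsubmx B') *m u + s *: c).
have HP' : polyF P' by apply: FM1.
apply: polyF_ext (IH _ _ P' (col_mx 1%:M 0) (col_mx 0 1%:M) HP') _ => v.
have E : forall y1 : 'cV[R]_k, col_mx 1%:M 0 *m v + col_mx 0 1%:M *m y1 = col_mx v y1.
  by move=> y1; rewrite !mul_col_mx !mul1mx !mul0mx add_col_mx addr0 add0r.
split.
- case=> y1; rewrite E; case=> s Hs.
  exists (col_mx (s%:M : 'cV[R]_1) y1 : 'cV[R]_(1 + k)).
  suff -> : B *m (col_mx (s%:M : 'cV[R]_1) y1 : 'cV[R]_(1 + k)) = rsubmx B' *m y1 + s *: c.
    by rewrite addrA -mul_row_col.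
  change (B' *m (col_mx (s%:M : 'cV[R]_1) y1 : 'cV[R]_(1 + k)) = rsubmx B' *m y1 + s *: c).
  by rewrite -{1}(hsubmxK B') mul_row_col mul_mx_scalar addrC.
- case=> y Hy; exists (dsubmx (y : 'cV[R]_(1 + k))); rewrite E.
  exists (usubmx (y : 'cV[R]_(1 + k)) 0 0).
  suff -> : row_mx A (rsubmx B') *m col_mx v (dsubmx (y : 'cV[R]_(1 + k))) + usubmx (y : 'cV[R]_(1 + k)) 0 0 *: c = A *m v + B *m y by [].
  rewrite mul_row_col -addrA; congr (_ + _).
  change (rsubmx B' *m dsubmx (y : 'cV[R]_(1 + k)) + usubmx (y : 'cV[R]_(1 + k)) 0 0 *: c = B' *m (y : 'cV[R]_(1 + k))).
  rewrite -[in RHS](hsubmxK B') -[in RHS](vsubmxK (y : 'cV[R]_(1 + k))) mul_row_col addrC; congr (_ + _).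
  by rewrite [usubmx _ in RHS]mx11_scalar mul_mx_scalar.
Qed.

Lemma polyF_lb (R : realFieldType) (m : nat) (e : 'cV[R]_m) :
  polyF (fun u : 'cV[R]_m => forall i, e i 0 <= u i 0).
Proof.
exists 'I_m, (fun i => - (delta_mx 0 i : 'rV[R]_m)), (fun i => - e i 0) => u.
have E : forall i, ((- (delta_mx 0 i : 'rV[R]_m)) *m u) 0 0 = - u i 0.
  by move=> i; rewrite mulNmx -rowE !mxE.
by split=> H i; have := H i; rewrite E lerN2.
Qed.


Lemma polyF_polyhedron (R : realFieldType) (p : nat) (P : 'cV[R]_p -> Prop) :
  polyF P -> polyhedron P.
Proof.
case=> T [a [b H]].
pose ev : 'I_#|T| -> T := enum_val.
pose Am : 'M[R]_(#|T|, p) := \matrix_(i < #|T|, j < p) a (ev i) 0 j.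
pose bm : 'cV[R]_#|T| := \matrix_(i < #|T|, j < 1) b (ev i).
exists #|T|, Am, bm => v.
have E : forall i, (Am *m v) i 0 = (a (ev i) *m v) 0 0.
  by move=> i; rewrite !mxE; apply: eq_bigr => j _; rewrite mxE.
apply: iff_trans (H v) _; split=> Hv t.
  rewrite E [bm _ _]mxE; exact: Hv.
by have := Hv (enum_rank t); rewrite E [bm _ _]mxE /ev enum_rankK.
Qed.

Definition okP (R : realFieldType) (m : option bool) (w z : R) : Prop :=
  match m with None => 0 <= w /\ 0 <= z /\ w * z = 0 | Some true => z = 0 | Some false => w = 0 end.
Definition okD (R : realFieldType) (m : option bool) (a b : R) : Prop :=
  match m with None => 0 <= a /\ 0 <= b /\ a * b = 0 | Some true => a = 0 | Some false => b = 0 end.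
Arguments okP {R}. Arguments okD {R}.

Definition PSuff (R : realFieldType) (k N : nat) (A B : 'M[R]_(k,N)) :=
  forall w z : 'cV[R]_N, A *m w + B *m z = 0 -> (forall i, w i 0 * z i 0 <= 0) -> forall i, w i 0 * z i 0 = 0.
Definition DSuff (R : realFieldType) (k N : nat) (A B : 'M[R]_(k,N)) :=
  forall y : 'cV[R]_k, (forall i, 0 <= (A^T *m y) i 0 * (B^T *m y) i 0) -> forall i, (A^T *m y) i 0 * (B^T *m y) i 0 = 0.
Definition Sol (R : realFieldType) (k N : nat) (A B : 'M[R]_(k,N)) (q : 'cV[R]_k) (md : 'I_N -> option bool) :=
  exists w z : 'cV[R]_N, A *m w + B *m z = q /\ forall i, okP (md i) (w i 0) (z i 0).
Definition Cert (R : realFieldType) (k N : nat) (A B : 'M[R]_(k,N)) (q : 'cV[R]_k) (md : 'I_N -> option bool) :=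
  exists y : 'cV[R]_k, (q^T *m y) 0 0 < 0 /\ forall i, okD (md i) ((A^T *m y) i 0) ((B^T *m y) i 0).

Arguments PSuff {R k N}. Arguments DSuff {R k N}. Arguments Sol {R k N}. Arguments Cert {R k N}.
Lemma entA (R : realFieldType) (k l : nat) (X Y : 'M[R]_(k,l)) i j : (X + Y) i j = X i j + Y i j.
Proof. by rewrite mxE. Qed.
Lemma entB (R : realFieldType) (k l : nat) (X Y : 'M[R]_(k,l)) i j : (X - Y) i j = X i j - Y i j.
Proof. by rewrite !mxE. Qed.
Lemma entN (R : realFieldType) (k l : nat) (X : 'M[R]_(k,l)) i j : (- X) i j = - X i j.
Proof. by rewrite !mxE. Qed.

Lemma dotl (R : realFieldType) (k : nat) (u v : 'cV[R]_k) :
  (u^T *m v) 0 0 = \sum_i u i 0 * v i 0.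
Proof. by rewrite mxE; apply: eq_bigr => i _; rewrite mxE. Qed.

Lemma keyid (R : realFieldType) (k N : nat) (A B : 'M[R]_(k,N)) (w z : 'cV[R]_N) (y : 'cV[R]_k) :
  ((A *m w + B *m z)^T *m y) 0 0 = \sum_i ((A^T *m y) i 0 * w i 0 + (B^T *m y) i 0 * z i 0).
Proof.
have dotD : forall X Y : 'cV[R]_k, ((X + Y)^T *m y) 0 0 = (X^T *m y) 0 0 + (Y^T *m y) 0 0.
  by move=> X Y; rewrite !dotl -big_split; apply: eq_bigr => i _; rewrite entA mulrDl.
rewrite dotD !trmx_mul -!mulmxA !dotl -big_split /=.
by apply: eq_bigr => i _; rewrite [w i 0 * _]mulrC [z i 0 * _]mulrC.
Qed.

Lemma prodP (R : realFieldType) (m : option bool) (w1 z1 w2 z2 : R) :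
  okP m w1 z1 -> okP m w2 z2 -> (w1 - w2) * (z1 - z2) <= 0.
Proof.
case: m => [[]|] /=.
- by move=> -> ->; rewrite subrr mulr0.
- by move=> -> ->; rewrite subrr mul0r.
- move=> [w1p [z1p e1]] [w2p [z2p e2]].
  rewrite mulrBl !mulrBr e1 e2 sub0r subr0 -opprD oppr_le0.
  by apply: addr_ge0; apply: mulr_ge0.
Qed.

Lemma prodD (R : realFieldType) (m : option bool) (a1 b1 a2 b2 : R) :
  okD m a1 b1 -> okD m a2 b2 -> 0 <= (a1 + a2) * (b1 + b2).
Proof.
case: m => [[]|] /=.
- by move=> -> ->; rewrite addr0 mul0r.
- by move=> -> ->; rewrite addr0 mulr0.
- move=> [a1p [b1p e1]] [a2p [b2p e2]].
  by apply: mulr_ge0; apply: addr_ge0.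
Qed.

Lemma mixPD (R : realFieldType) (m : option bool) (w z a b : R) :
  okP m w z -> okD m a b -> 0 <= a * w + b * z.
Proof.
case: m => [[]|] /=.
- by move=> -> ->; rewrite mul0r mulr0 addr0.
- by move=> -> ->; rewrite mul0r mulr0 addr0.
- move=> [wp [zp _]] [ap [bp _]].
  by apply: addr_ge0; apply: mulr_ge0.
Qed.

Lemma base (R : realFieldType) (k N : nat) (A B : 'M[R]_(k,N)) (q : 'cV[R]_k) (md : 'I_N -> option bool) :
  (forall i, md i != None) -> Sol A B q md \/ Cert A B q md.
Proof.
move=> Hmd.
pose isZ i := md i == Some false.
pose G : 'M[R]_(k,N) := \matrix_(r < k, i < N) (if isZ i then B r i else A r i).
case: (boolP (q^T <= G^T)%MS) => [/submxP [D HD] | Hn].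
- left. pose x : 'cV[R]_N := D^T.
  have Hq : q = G *m x by rewrite -[q]trmxK HD trmx_mul trmxK.
  exists (\col_i (if isZ i then 0 else x i 0)), (\col_i (if isZ i then x i 0 else 0)); split.
    rewrite Hq; apply/matrixP => r j; rewrite [j]ord1 entA !mxE -big_split; apply: eq_bigr => i _.
    rewrite !mxE /=; case: (isZ i); by rewrite ?mulr0 ?addr0 ?add0r.
  move=> i; rewrite !mxE /isZ; have := Hmd i; by case: (md i) => [[]|].
- right. rewrite submxE in Hn. set K := cokermx G^T in Hn.
  have [j Hj] : exists j, (q^T *m K) 0 j != 0.
    case: (boolP [exists j, (q^T *m K) 0 j != 0]) => [/existsP // |].
    rewrite negb_exists => /forallP H; exfalso; move: Hn; apply/negP; rewrite negbK.
    apply/eqP/matrixP => i j; rewrite [i]ord1.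
    by have := H j; rewrite negbK => /eqP ->; rewrite mxE.
  pose y0 : 'cV[R]_k := K *m delta_mx j 0.
  have GT0 : G^T *m y0 = 0 by rewrite mulmxA mulmx_coker mul0mx.
  have qy0 : (q^T *m y0) 0 0 = (q^T *m K) 0 j by rewrite mulmxA -colE mxE.
  pose y := if (q^T *m K) 0 j < 0 then y0 else - y0.
  have GTy : G^T *m y = 0 by rewrite /y; case: ifP; rewrite ?mulmxN GT0 ?oppr0.
  have eqG : forall i, (G^T *m y) i 0 = if isZ i then (B^T *m y) i 0 else (A^T *m y) i 0.
    move=> i; rewrite !mxE; case E: (isZ i); apply: eq_bigr => r _; by rewrite !mxE E.
  exists y; split.
    rewrite /y; case: ifP => H; first by rewrite qy0.
    rewrite mulmxN entN qy0 oppr_lt0 lt_neqAle eq_sym Hj /= leNgt H //.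
  move=> i; have := eqG i; rewrite GTy mxE /isZ; have := Hmd i.
  by case: (md i) => [[]|] //= _ ->.
Qed.

Lemma alt (R : realFieldType) (k N : nat) (A B : 'M[R]_(k,N)) (q : 'cV[R]_k) :
  PSuff A B -> DSuff A B -> forall md, Sol A B q md \/ Cert A B q md.
Proof.
move=> hP hD.
suff H : forall c md, (#|[pred i | md i == None]| <= c)%N -> Sol A B q md \/ Cert A B q md.
  by move=> md; exact: (H _ md (leqnn _)).
elim=> [|c IH] md Hc.
  apply: base => i; apply/negP => /eqP Hi.
  have : (0 < #|[pred i | md i == None]|)%N by apply/card_gt0P; exists i; rewrite inE Hi.
  by move/leq_trans/(_ Hc).
case: (boolP [exists i, md i == None]) => [/existsP [n /eqP Hn]|]; last first.
  by rewrite negb_exists => /forallP H0; apply: base => i; exact: H0 i.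
have Hc1 : forall b, (#|[pred i | (if i == n then Some b else md i) == None]| <= c)%N.
  move=> b; rewrite (cardD1 n) inE Hn eqxx /= add1n ltnS in Hc.
  apply: leq_trans Hc; apply: subset_leq_card; apply/subsetP => i; rewrite !inE.
  by case: (i =P n) => [->|/eqP ne] //= ->; rewrite andbT.
have [S1|C1] := IH _ (Hc1 true); have [S2|C2] := IH _ (Hc1 false).
- case: S1 => w1 [z1 [E1 O1]]; case: S2 => w2 [z2 [E2 O2]].
  have z1n : z1 n 0 = 0 by have := O1 n; rewrite eqxx.
  have w2n : w2 n 0 = 0 by have := O2 n; rewrite eqxx.
  have O1' : forall i, i != n -> okP (md i) (w1 i 0) (z1 i 0) by move=> i ne; have := O1 i; rewrite (negbTE ne).
  have O2' : forall i, i != n -> okP (md i) (w2 i 0) (z2 i 0) by move=> i ne; have := O2 i; rewrite (negbTE ne).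
  case: (lerP 0 (w1 n 0)) => w1n.
    left; exists w1, z1; split=> // i; case: (i =P n) => [->|/eqP ne]; last exact: O1'.
    by rewrite Hn /= z1n mulr0.
  case: (lerP 0 (z2 n 0)) => z2n.
    left; exists w2, z2; split=> // i; case: (i =P n) => [->|/eqP ne]; last exact: O2'.
    by rewrite Hn /= w2n mul0r.
  exfalso.
  have hz : A *m (w1 - w2) + B *m (z1 - z2) = 0 by rewrite !mulmxBr addrACA -opprD E1 E2 subrr.
  have ltn : (w1 - w2) n 0 * (z1 - z2) n 0 < 0.
    by rewrite !entB z1n w2n sub0r subr0 pmulr_llt0 // oppr_gt0.
  have Hle : forall i, (w1 - w2) i 0 * (z1 - z2) i 0 <= 0.
    move=> i; case: (i =P n) => [->|/eqP ne]; first exact: ltW.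
    rewrite !entB; exact: prodP (O1' i ne) (O2' i ne).
  by have := hP _ _ hz Hle n; move/eqP; rewrite (lt_eqF ltn).
- case: S1 => w1 [z1 [E1 O1]]; case: C2 => y2 [Q2 D2].
  have z1n : z1 n 0 = 0 by have := O1 n; rewrite eqxx.
  have b2n : (B^T *m y2) n 0 = 0 by have := D2 n; rewrite eqxx.
  have O1' : forall i, i != n -> okP (md i) (w1 i 0) (z1 i 0) by move=> i ne; have := O1 i; rewrite (negbTE ne).
  have D2' : forall i, i != n -> okD (md i) ((A^T *m y2) i 0) ((B^T *m y2) i 0) by move=> i ne; have := D2 i; rewrite (negbTE ne).
  case: (lerP 0 (w1 n 0)) => w1n.
    left; exists w1, z1; split=> // i; case: (i =P n) => [->|/eqP ne]; last exact: O1'.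
    by rewrite Hn /= z1n mulr0.
  case: (lerP 0 ((A^T *m y2) n 0)) => a2n.
    right; exists y2; split=> // i; case: (i =P n) => [->|/eqP ne]; last exact: D2'.
    by rewrite Hn /= b2n mulr0.
  exfalso; move: Q2; rewrite -E1 keyid ltNge; apply/negP/negPn.
  apply: sumr_ge0 => i _; case: (i =P n) => [->|/eqP ne]; last exact: mixPD (O1' i ne) (D2' i ne).
  by rewrite z1n b2n mulr0 addr0 ltW // nmulr_rgt0.
- case: C1 => y1 [Q1 D1]; case: S2 => w2 [z2 [E2 O2]].
  have a1n : (A^T *m y1) n 0 = 0 by have := D1 n; rewrite eqxx.
  have w2n : w2 n 0 = 0 by have := O2 n; rewrite eqxx.
  have D1' : forall i, i != n -> okD (md i) ((A^T *m y1) i 0) ((B^T *m y1) i 0) by move=> i ne; have := D1 i; rewrite (negbTE ne).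
  have O2' : forall i, i != n -> okP (md i) (w2 i 0) (z2 i 0) by move=> i ne; have := O2 i; rewrite (negbTE ne).
  case: (lerP 0 ((B^T *m y1) n 0)) => b1n.
    right; exists y1; split=> // i; case: (i =P n) => [->|/eqP ne]; last exact: D1'.
    by rewrite Hn /= a1n mul0r.
  case: (lerP 0 (z2 n 0)) => z2n.
    left; exists w2, z2; split=> // i; case: (i =P n) => [->|/eqP ne]; last exact: O2'.
    by rewrite Hn /= w2n mul0r.
  exfalso; move: Q1; rewrite -E2 keyid ltNge; apply/negP/negPn.
  apply: sumr_ge0 => i _; case: (i =P n) => [->|/eqP ne]; last exact: mixPD (O2' i ne) (D1' i ne).
  by rewrite w2n a1n mulr0 add0r ltW // nmulr_rgt0.
- case: C1 => y1 [Q1 D1]; case: C2 => y2 [Q2 D2].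
  have a1n : (A^T *m y1) n 0 = 0 by have := D1 n; rewrite eqxx.
  have b2n : (B^T *m y2) n 0 = 0 by have := D2 n; rewrite eqxx.
  have D1' : forall i, i != n -> okD (md i) ((A^T *m y1) i 0) ((B^T *m y1) i 0) by move=> i ne; have := D1 i; rewrite (negbTE ne).
  have D2' : forall i, i != n -> okD (md i) ((A^T *m y2) i 0) ((B^T *m y2) i 0) by move=> i ne; have := D2 i; rewrite (negbTE ne).
  case: (lerP 0 ((B^T *m y1) n 0)) => b1n.
    right; exists y1; split=> // i; case: (i =P n) => [->|/eqP ne]; last exact: D1'.
    by rewrite Hn /= a1n mul0r.
  case: (lerP 0 ((A^T *m y2) n 0)) => a2n.
    right; exists y2; split=> // i; case: (i =P n) => [->|/eqP ne]; last exact: D2'.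
    by rewrite Hn /= b2n mulr0.
  exfalso.
  have gtn : 0 < (A^T *m (y1 + y2)) n 0 * (B^T *m (y1 + y2)) n 0.
    by rewrite !mulmxDr !entA a1n b2n add0r addr0 nmulr_rgt0.
  have Hge : forall i, 0 <= (A^T *m (y1 + y2)) i 0 * (B^T *m (y1 + y2)) i 0.
    move=> i; case: (i =P n) => [->|/eqP ne]; first exact: ltW.
    rewrite !mulmxDr !entA; exact: prodD (D1' i ne) (D2' i ne).
  by have := hD _ Hge n; move/eqP; rewrite (gt_eqF gtn).
Qed.

Lemma col_le (R : realFieldType) (m1 m2 : nat) (a c : 'cV[R]_m1) (b d : 'cV[R]_m2) :
  (forall i, col_mx a b i 0 <= col_mx c d i 0) <-> ((forall i, a i 0 <= c i 0) /\ (forall i, b i 0 <= d i 0)).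
Proof.
split.
  move=> H; split=> i; [have := H (lshift m2 i) | have := H (rshift m1 i)];
  by rewrite ?col_mxEu ?col_mxEd.
case=> H1 H2 i; rewrite -(splitK i); case: (split i) => j /=.
  by rewrite !col_mxEu; exact: H1.
by rewrite !col_mxEd; exact: H2.
Qed.

Lemma trN (R : realFieldType) (n : nat) (M : 'M[R]_n) (y : 'cV[R]_n) :
  (- M)^T *m y = - (M^T *m y).
Proof.
apply/matrixP => i j; rewrite !mxE -sumrN; apply: eq_bigr => r _; by rewrite !mxE mulNr.
Qed.

Lemma Q0 (R : realFieldType) (n : nat) (M : 'M[R]_n) (x : 'cV[R]_n) : sufficient M ->
  (exists z : 'cV[R]_n, (forall i, 0 <= z i 0) /\ (forall i, 0 <= (x + M *m z) i 0)) -> compl_range M x.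
Proof.
case=> hc hr [zb [zb0 wb0]].
have hPS : PSuff (1%:M : 'M[R]_n) (- M).
  move=> w z; rewrite mul1mx mulNmx => /eqP; rewrite subr_eq0 => /eqP hw H i.
  rewrite hw mulrC; apply: hc => j; have := H j; by rewrite hw mulrC.
have hDS : DSuff (1%:M : 'M[R]_n) (- M).
  move=> y H i; rewrite trmx1 mul1mx trN entN mulrN.
  have -> : y i 0 * (M^T *m y) i 0 = 0; last by rewrite oppr0.
  apply: hr => j; have := H j; by rewrite trmx1 mul1mx trN entN mulrN oppr_ge0.
case: (@alt _ _ _ _ _ x hPS hDS (fun _ => None)) => [[w [z [E O]]] | [y [Q D]]].
  exists w, z; split; first by rewrite mul1mx mulNmx in E.
  split; first by move=> i; case: (O i).
  split; first by move=> i; case: (O i) => _ [].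
  by rewrite dotl big1 // => i _; case: (O i) => _ [].
exfalso.
have Ex : 1%:M *m (x + M *m zb) + (- M) *m zb = x by rewrite mul1mx mulNmx addrK.
move: Q; rewrite -[in X in X -> _]Ex keyid ltNge; apply/negP/negPn.
apply: sumr_ge0 => i _; case: (D i) => a0 [b0 _]; apply: addr_ge0; apply: mulr_ge0 => //.
Qed.

Theorem mainTheorem6 (R : realFieldType) (n d : nat) (M : 'M[R]_n)
    (Q : 'M[R]_(n, d)) (q : 'cV[R]_n) :
  sufficient M ->
  polyhedron (fun x : 'cV[R]_n =>
    (exists theta : 'cV[R]_d, x = q + Q *m theta) /\ compl_range M x).
Proof.
move=> hM.
pose Am : 'M[R]_((n + n) + (n + n), n) := col_mx (col_mx 1%:M (- 1%:M)) (col_mx 0 1%:M).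
pose Bm : 'M[R]_((n + n) + (n + n), d + n) :=
  col_mx (col_mx (row_mx (- Q) 0) (row_mx Q 0)) (col_mx (row_mx 0 1%:M) (row_mx 0 M)).
pose e : 'cV[R]_((n + n) + (n + n)) := col_mx (col_mx q (- q)) (col_mx 0 0).
apply: polyF_polyhedron; apply: polyF_ext (@FMk R (d + n) _ _ _ Am Bm (@polyF_lb R _ e)) _ => x.
have EB : forall (th : 'cV[R]_d) (z : 'cV[R]_n), Am *m x + Bm *m col_mx th z =
    col_mx (col_mx (x - Q *m th) (- x + Q *m th)) (col_mx z (x + M *m z)).
  move=> th z; rewrite !mul_col_mx !mul_row_col !add_col_mx !mul1mx !mulNmx !mul0mx.
  by rewrite !addr0 !add0r mul1mx.
split.
- case=> y /=; rewrite -[y](vsubmxK y) EB; set th := usubmx y; set z := dsubmx y.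
  case/col_le; case/col_le => H1 H2; case/col_le => H3 H4.
  have hx : x = q + Q *m th.
    apply/matrixP => i j; rewrite [j]ord1; apply/eqP; rewrite eq_le; apply/andP; split.
      move: (H2 i); rewrite !entA !entN lerNl opprD opprK => h; rewrite -lerBlDr; exact: h.
    by have := H1 i; rewrite entB entA lerBrDr.
  split; first by exists th.
  apply: Q0 => //; exists z; split.
    by move=> i; have := H3 i; rewrite mxE.
  by move=> i; have := H4 i; rewrite mxE.
- case=> [[th hx] [w [z [Ew [w0 [z0 _]]]]]].
  exists (col_mx th z); rewrite EB; apply/col_le; split; apply/col_le; split => i.
  + by rewrite hx entB entA addrK.
  + by rewrite hx opprD addrNK.
  + by rewrite mxE.
  + by rewrite mxE -Ew subrK.
Qed.
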